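(* Let $(S_b,I_b,R_b,D_b,S_r,I_r,R_r,D_r)$ be a solution of the modified Lanchester/SIR system defined for all $t\ge0$ with nonnegative components and nonnegative initial conditions, and suppose all model parameters are constant for $t\ge T_0$ for some $T_0$ (i.e. all switching events have occurred). Then for each compartment $C\in\{S_b,I_b,R_b,D_b,S_r,I_r,R_r,D_r\}$, $C'(t)\to 0$ as $t\to\infty$.
   Context: Barrier function: $f(x)=\exp(-0.0001/x)$ for $x>0$, $f(0)=0$; $f(x)x^a:=0$ at $x=0$. System (with $N_b=S_b+I_b+R_b$, $N_r=S_r+I_r+R_r$, $1/N$-terms set to $0$ when $N=0$), $A_r := \delta_r(f(S_r)S_r^p+f(R_r)R_r^p+\eta_r f(I_r)I_r^p)$: $S_b' = -\beta_b S_bI_b/N_b - \gamma_b S_b - A_r f(S_b)S_b^q - \alpha_r(S_r+R_r)S_b$, $I_b' = \beta_b S_bI_b/N_b - \tilde\gamma_b I_b(S_b+R_b)/N_b - A_r f(I_b)I_b^q + \alpha_r(S_r+R_r)S_b$, $R_b' = \gamma_b S_b + \tilde\gamma_b I_b(S_b+R_b)/N_b - A_r f(R_b)R_b^q$, $D_b' = A_r(f(S_b)S_b^q+f(I_b)I_b^q+f(R_b)R_b^q)$, red equations by interchanging $b$ and $r$. Parameters $\alpha,\beta,\tilde\gamma,\delta\ge0$, $\gamma,\eta\in[0,1]$, $p,q\ge0$; the parameters $\alpha,\gamma,\tilde\gamma,\delta$ may be piecewise constant in time (switched on/off at finitely many event times). *)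

(* Defs.v *)
From Stdlib Require Import Reals Lra List.
Open Scope R_scope.

(* f(x) x^a with the barrier f(x) = exp(-0.0001/x); set to 0 for x <= 0
   (the convention f(x)x^a := 0 at x = 0; components are nonnegative). *)
Definition fpow (x a : R) : R :=
  if Rlt_dec 0 x then exp (- (1/10000) / x) * Rpower x a else 0.

(* num / N, with the convention that 1/N-terms are 0 when N = 0 *)
Definition divN (num N : R) : R :=
  if Req_EM_T N 0 then 0 else num / N.

Definition attack (delta eta p S I Rc : R) : R :=
  delta * (fpow S p + fpow Rc p + eta * fpow I p).

(* right-hand sides for one side (own compartments S I R, opponent's So Ro,
   opponent's attack strength A, opponent's alpha alpha_o) *)
Definition rhsS (beta gamma alpha_o A q S I Rc So Ro : R) : R :=
  - beta * divN (S * I) (S + I + Rc) - gamma * S - A * fpow S q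
  - alpha_o * (So + Ro) * S.
Definition rhsI (beta gtilde alpha_o A q S I Rc So Ro : R) : R :=
  beta * divN (S * I) (S + I + Rc) - gtilde * divN (I * (S + Rc)) (S + I + Rc)
  - A * fpow I q + alpha_o * (So + Ro) * S.
Definition rhsR (gamma gtilde A q S I Rc : R) : R :=
  gamma * S + gtilde * divN (I * (S + Rc)) (S + I + Rc) - A * fpow Rc q.
Definition rhsD (A q S I Rc : R) : R :=
  A * (fpow S q + fpow I q + fpow Rc q).

Definition piecewise_const (ev : list R) (h : R -> R) : Prop :=
  forall t1 t2, 0 <= t1 <= t2 ->
    (forall e, In e ev -> e < t1 \/ t2 < e) -> h t1 = h t2.

Definition const_from (T0 : R) (h : R -> R) : Prop :=
  forall t, T0 <= t -> h t = h T0.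

Definition deriv_tends_to_0 (C : R -> R) : Prop :=
  forall eps, 0 < eps -> exists M, forall t, M <= t ->
    exists l, derivable_pt_lim C t l /\ Rabs l < eps.

(* Main.v *)
Require Import Defs.
From Stdlib Require Import Reals Lra List Classical.
Open Scope R_scope.

Lemma fpow_nonneg x a : 0 <= fpow x a.
Proof.
  unfold fpow; destruct (Rlt_dec 0 x).
  - apply Rmult_le_pos; [left; apply exp_pos|unfold Rpower; left; apply exp_pos].
  - lra.
Qed.

Lemma fpow_cont a c : 0 <= a -> 0 <= c -> continuity_pt (fun x => fpow x a) c.
Proof.
  intros Ha Hc. destruct Hc as [Hc|Hc].
  - apply continuity_pt_locally_ext with
      (f := fun x => exp (- (1/10000) / x) * Rpower x a) (a := c).
    + exact Hc.
    + intros y Hy. unfold Rdist in Hy. unfold fpow.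
      destruct (Rlt_dec 0 y) as [|n]; [reflexivity|].
      exfalso; apply n. apply Rabs_def2 in Hy. lra.
    + apply continuity_pt_mult.
      * apply (continuity_pt_comp (fun x => - (1/10000) / x) exp).
        -- change (continuity_pt (mult_fct (fct_cte (- (1/10000))) (inv_fct id)) c).
           apply continuity_pt_mult. apply derivable_continuous_pt, derivable_pt_const.
           apply continuity_pt_inv. apply derivable_continuous_pt, derivable_pt_id. unfold id; lra.
        -- apply derivable_continuous_pt. apply derivable_pt_exp.
      * apply derivable_continuous_pt. exists (a * Rpower c (a - 1)).
        apply derivable_pt_lim_power. exact Hc.
  - subst c. unfold continuity_pt, continue_in, limit1_in, limit_in. simpl.
    intros eps Heps. exists (Rmin 1 (eps / 20000)). split.
    + apply Rmin_pos; lra.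
    + intros x [_ Hx]. unfold Rdist in *.
      replace (fpow 0 a) with 0 by (unfold fpow; destruct (Rlt_dec 0 0); [lra|reflexivity]).
      rewrite Rminus_0_r in Hx. rewrite Rminus_0_r.
      unfold fpow. destruct (Rlt_dec 0 x) as [Hx0|Hx0].
      * rewrite Rabs_right in Hx by lra.
        assert (Hx1 : x < 1) by (eapply Rlt_le_trans; [exact Hx| apply Rmin_l]).
        assert (Hx2 : x < eps/20000) by (eapply Rlt_le_trans; [exact Hx| apply Rmin_r]).
        assert (HP : Rpower x a <= 1).
        { unfold Rpower. rewrite <- exp_0. destruct (Req_dec a 0) as [->|].
          - rewrite Rmult_0_l; lra.
          - left; apply exp_increasing.
            assert (ln x < 0) by (rewrite <- ln_1; apply ln_increasing; lra). nra. }
        assert (HE : exp (- (1/10000) / x) <= 10000 * x).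
        { assert (Hy : 0 < (1/10000)/x) by (apply Rdiv_lt_0_compat; lra).
          pose proof (exp_ineq1 ((1/10000)/x) ltac:(lra)) as He.
          replace (- (1/10000) / x) with (- ((1/10000)/x)) by (field; lra).
          rewrite exp_Ropp.
          assert (0 < exp ((1/10000)/x)) by apply exp_pos.
          apply Rmult_le_reg_l with (exp ((1/10000)/x)); [lra|].
          rewrite Rinv_r by lra.
          assert ((1/10000)/x * (10000 * x) = 1) by (field; lra). nra. }
        assert (0 <= Rpower x a) by (unfold Rpower; left; apply exp_pos).
        assert (0 < exp (- (1/10000) / x)) by apply exp_pos.
        rewrite Rabs_right by nra. nra.
      * rewrite Rabs_R0. lra.
Qed.

Definition UC (T:R) (g:R->R) := forall eps, 0<eps -> exists del, 0<del /\
  forall t s, T<=t -> T<=s -> Rabs (t-s) < del -> Rabs (g t - g s) < eps.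
Definition Bnd (T:R) (g:R->R) := exists B, forall t, T<=t -> Rabs (g t) <= B.
Definition Good T g := UC T g /\ Bnd T g.

Lemma Bnd_const T c : Bnd T (fun _ => c).
Proof. exists (Rabs c); intros; lra. Qed.
Lemma Bnd_plus T f g : Bnd T f -> Bnd T g -> Bnd T (fun t => f t + g t).
Proof. intros [B1 H1] [B2 H2]; exists (B1+B2); intros t Ht.
  eapply Rle_trans; [apply Rabs_triang|]. specialize (H1 t Ht); specialize (H2 t Ht); lra. Qed.
Lemma Bnd_opp T f : Bnd T f -> Bnd T (fun t => - f t).
Proof. intros [B1 H1]; exists B1; intros t Ht; rewrite Rabs_Ropp; auto. Qed.
Lemma Bnd_minus T f g : Bnd T f -> Bnd T g -> Bnd T (fun t => f t - g t).
Proof. intros H1 H2. apply (Bnd_plus T f (fun t => - g t)); auto. apply Bnd_opp; auto. Qed.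
Lemma Bnd_mult T f g : Bnd T f -> Bnd T g -> Bnd T (fun t => f t * g t).
Proof. intros [B1 H1] [B2 H2]; exists (B1*B2); intros t Ht.
  rewrite Rabs_mult. specialize (H1 t Ht); specialize (H2 t Ht).
  apply Rmult_le_compat; auto; apply Rabs_pos. Qed.

Lemma UC_const T c : UC T (fun _ => c).
Proof. intros e He; exists 1; split; [lra|]; intros. rewrite Rminus_diag, Rabs_R0; lra. Qed.
Lemma UC_plus T f g : UC T f -> UC T g -> UC T (fun t => f t + g t).
Proof. intros H1 H2 e He. destruct (H1 (e/2)) as [d1 [Hd1 K1]]; [lra|].
  destruct (H2 (e/2)) as [d2 [Hd2 K2]]; [lra|].
  exists (Rmin d1 d2); split; [apply Rmin_pos; auto|]. intros t s Ht Hs Hts.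
  assert (Rabs (t-s) < d1) by (eapply Rlt_le_trans; [exact Hts|apply Rmin_l]).
  assert (Rabs (t-s) < d2) by (eapply Rlt_le_trans; [exact Hts|apply Rmin_r]).
  specialize (K1 t s Ht Hs ltac:(assumption)). specialize (K2 t s Ht Hs ltac:(assumption)).
  replace (f t + g t - (f s + g s)) with ((f t - f s) + (g t - g s)) by ring.
  eapply Rle_lt_trans; [apply Rabs_triang|]. lra. Qed.
Lemma UC_opp T f : UC T f -> UC T (fun t => - f t).
Proof. intros H1 e He. destruct (H1 e He) as [d [Hd K]]. exists d; split; auto.
  intros t s Ht Hs Hts. replace (- f t - - f s) with (- (f t - f s)) by ring.
  rewrite Rabs_Ropp; auto. Qed.
Lemma UC_minus T f g : UC T f -> UC T g -> UC T (fun t => f t - g t).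
Proof. intros H1 H2. apply (UC_plus T f (fun t => - g t)); auto. apply UC_opp; auto. Qed.
Lemma UC_mult T f g : Good T f -> Good T g -> UC T (fun t => f t * g t).
Proof. intros [H1 [B1 K1]] [H2 [B2 K2]] e He.
  assert (HB1 : 0 <= B1) by (eapply Rle_trans; [apply Rabs_pos|apply (K1 T)]; lra).
  assert (HB2 : 0 <= B2) by (eapply Rle_trans; [apply Rabs_pos|apply (K2 T)]; lra).
  destruct (H1 (e/(2*(B2+1)))) as [d1 [Hd1 L1]]. { apply Rdiv_lt_0_compat; lra. }
  destruct (H2 (e/(2*(B1+1)))) as [d2 [Hd2 L2]]. { apply Rdiv_lt_0_compat; lra. }
  exists (Rmin d1 d2); split; [apply Rmin_pos; auto|]. intros t s Ht Hs Hts.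
  assert (Rabs (t-s) < d1) by (eapply Rlt_le_trans; [exact Hts|apply Rmin_l]).
  assert (Rabs (t-s) < d2) by (eapply Rlt_le_trans; [exact Hts|apply Rmin_r]).
  specialize (L1 t s Ht Hs ltac:(assumption)). specialize (L2 t s Ht Hs ltac:(assumption)).
  replace (f t * g t - f s * g s) with ((f t - f s) * g t + f s * (g t - g s)) by ring.
  eapply Rle_lt_trans; [apply Rabs_triang|]. rewrite !Rabs_mult.
  specialize (K1 s Hs). specialize (K2 t Ht).
  assert (Rabs (f t - f s) * Rabs (g t) <= e/(2*(B2+1)) * (B2+1)).
  { apply Rmult_le_compat; try apply Rabs_pos; lra. }
  assert (Rabs (f s) * Rabs (g t - g s) <= (B1+1) * (e/(2*(B1+1)))).
  { apply Rmult_le_compat; try apply Rabs_pos; lra. }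
  assert (e/(2*(B2+1)) * (B2+1) = e/2) by (field; lra).
  assert ((B1+1) * (e/(2*(B1+1))) = e/2) by (field; lra).
  assert (Rabs (f t - f s) * Rabs (g t) < e/2 \/ Rabs (f s) * Rabs (g t - g s) < e/2 \/ True) by auto.
  assert (Rabs (f t - f s) * Rabs (g t) < e/2 \/ Rabs (f t - f s) * Rabs (g t) = 0 \/ True) by auto.
  destruct (Req_dec (Rabs (g t)) 0) as [Z|Z].
  - rewrite Z. assert (Rabs (f s) * Rabs (g t - g s) <= (B1+1) * (e/(2*(B1+1)))) by auto. lra.
  - assert (Rabs (f t - f s) * Rabs (g t) < e/(2*(B2+1)) * (B2+1)).
    { apply Rlt_le_trans with (e/(2*(B2+1)) * Rabs (g t)).
      apply Rmult_lt_compat_r; [pose proof (Rabs_pos (g t)); lra|lra].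
      apply Rmult_le_compat_l; [left; apply Rdiv_lt_0_compat; lra|lra]. }
    lra.
Qed.

Lemma Good_const T c : Good T (fun _ => c).
Proof. split; [apply UC_const|apply Bnd_const]. Qed.
Lemma Good_plus T f g : Good T f -> Good T g -> Good T (fun t => f t + g t).
Proof. intros [] []; split; [apply UC_plus|apply Bnd_plus]; auto. Qed.
Lemma Good_opp T f : Good T f -> Good T (fun t => - f t).
Proof. intros []; split; [apply UC_opp|apply Bnd_opp]; auto. Qed.
Lemma Good_minus T f g : Good T f -> Good T g -> Good T (fun t => f t - g t).
Proof. intros [] []; split; [apply UC_minus|apply Bnd_minus]; auto. Qed.
Lemma Good_mult T f g : Good T f -> Good T g -> Good T (fun t => f t * g t).
Proof. intros H1 H2; split; [apply UC_mult; auto|].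
  destruct H1, H2; apply Bnd_mult; auto. Qed.

Lemma Bnd_fpow T K x a : 0 <= a -> (forall t, T <= t -> 0 <= x t <= K) ->
  Bnd T (fun t => fpow (x t) a).
Proof.
  intros Ha Hx. assert (HK : 0 <= K) by (specialize (Hx T (Rle_refl T)); lra).
  destruct (continuity_ab_maj (fun y => fpow y a) 0 K HK) as [M [HM _]].
  { intros c Hc. apply fpow_cont; lra. }
  exists (fpow M a). intros t Ht. rewrite Rabs_right by (apply Rle_ge, fpow_nonneg).
  apply HM. auto.
Qed.

Lemma UC_fpow T K x a : 0 <= a -> (forall t, T <= t -> 0 <= x t <= K) -> UC T x ->
  UC T (fun t => fpow (x t) a).
Proof.
  intros Ha Hx Hu e He.
  assert (Hh := Heine (fun y => fpow y a) (fun c => 0 <= c <= K) (compact_P3 0 K)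
     (fun c Hc => fpow_cont a c Ha (proj1 Hc))).
  destruct (Hh (mkposreal e He)) as [[d Hd] Hd2]. simpl in Hd2.
  destruct (Hu d Hd) as [d' [Hd' K']]. exists d'; split; [exact Hd'|].
  intros t s Ht Hs Hts. apply Hd2; auto.
Qed.

Lemma Good_fpow T K x a : 0 <= a -> (forall t, T <= t -> 0 <= x t <= K) -> UC T x ->
  Good T (fun t => fpow (x t) a).
Proof. intros; split; [eapply UC_fpow|eapply Bnd_fpow]; eauto. Qed.

Lemma Rdiv_le_0_compat a b : 0 <= a -> 0 < b -> 0 <= a / b.
Proof. intros; unfold Rdiv; apply Rmult_le_pos; [lra|left; apply Rinv_0_lt_compat; lra]. Qed.

Lemma divN_zero N : divN 0 N = 0.
Proof. unfold divN; destruct Req_EM_T; [reflexivity|unfold Rdiv; ring]. Qed.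

Lemma divN_pos num N : 0 < N -> divN num N = num / N.
Proof. intros; unfold divN; destruct Req_EM_T; [lra|reflexivity]. Qed.

Lemma divN_bounds x y z : 0 <= x -> 0 <= y -> 0 <= z ->
  0 <= divN (x*y) (x+y+z) <= x.
Proof.
  intros. destruct (Req_dec (x+y+z) 0).
  - unfold divN; destruct Req_EM_T; lra.
  - rewrite divN_pos by lra. split.
    + apply Rdiv_le_0_compat; nra.
    + apply Rmult_le_reg_r with (x+y+z); [lra|]. unfold Rdiv.
      rewrite Rmult_assoc, Rinv_l by lra. nra.
Qed.

Lemma core1 u u' c d : 0 <= u -> 0 <= u' -> 0 <= d -> d <= c ->
  Rabs (divN (u*d) (u+c) - divN (u'*d) (u'+c)) <= Rabs (u-u').
Proof.
  intros. destruct (Req_dec c 0).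
  - assert (d = 0) by lra. subst. rewrite !Rmult_0_r, !divN_zero, Rminus_diag, Rabs_R0.
    apply Rabs_pos.
  - rewrite !divN_pos by lra.
    replace (u * d / (u + c) - u' * d / (u' + c)) with
      ((d*c) / ((u+c)*(u'+c)) * (u - u')) by (field; lra).
    rewrite Rabs_mult. rewrite (Rabs_right (d*c/_)).
    2:{ apply Rle_ge, Rdiv_le_0_compat; nra. }
    rewrite <- (Rmult_1_l (Rabs (u-u'))) at 2. apply Rmult_le_compat_r; [apply Rabs_pos|].
    apply Rmult_le_reg_r with ((u+c)*(u'+c)); [nra|]. unfold Rdiv.
    rewrite Rmult_assoc, Rinv_l by nra. nra.
Qed.

Lemma core2 e P z z' : 0 <= e -> 0 <= z -> 0 <= z' -> 0 <= P -> P <= e*e ->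
  Rabs (divN P (e+z) - divN P (e+z')) <= Rabs (z-z').
Proof.
  intros. destruct (Req_dec e 0).
  - assert (P = 0) by nra. subst. rewrite !divN_zero, Rminus_diag, Rabs_R0.
    apply Rabs_pos.
  - rewrite !divN_pos by lra.
    replace (P / (e + z) - P / (e + z')) with
      (P / ((e+z)*(e+z')) * (z' - z)) by (field; lra).
    rewrite Rabs_mult, (Rabs_minus_sym z' z). rewrite (Rabs_right (P/_)).
    2:{ apply Rle_ge, Rdiv_le_0_compat; nra. }
    rewrite <- (Rmult_1_l (Rabs (z-z'))) at 2. apply Rmult_le_compat_r; [apply Rabs_pos|].
    apply Rmult_le_reg_r with ((e+z)*(e+z')); [nra|]. unfold Rdiv.
    rewrite Rmult_assoc, Rinv_l by nra. nra.
Qed.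

Lemma divN_lip x y z x' y' z' : 0 <= x -> 0 <= y -> 0 <= z -> 0 <= x' -> 0 <= y' -> 0 <= z' ->
  Rabs (divN (x*y) (x+y+z) - divN (x'*y') (x'+y'+z')) <= Rabs (x-x') + Rabs (y-y') + Rabs (z-z').
Proof.
  intros.
  assert (G1 : Rabs (divN (x*y) (x+y+z) - divN (x'*y) (x'+y+z)) <= Rabs (x-x')).
  { replace (x+y+z) with (x+(y+z)) by ring. replace (x'+y+z) with (x'+(y+z)) by ring.
    apply core1; lra. }
  assert (G2 : Rabs (divN (x'*y) (x'+y+z) - divN (x'*y') (x'+y'+z)) <= Rabs (y-y')).
  { replace (x'+y+z) with (y+(x'+z)) by ring. replace (x'+y'+z) with (y'+(x'+z)) by ring.
    rewrite (Rmult_comm x' y), (Rmult_comm x' y'). apply core1; lra. }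
  assert (G3 : Rabs (divN (x'*y') (x'+y'+z) - divN (x'*y') (x'+y'+z')) <= Rabs (z-z')).
  { apply core2; nra. }
  pose proof (Rabs_triang (divN (x*y) (x+y+z) - divN (x'*y) (x'+y+z))
     (divN (x'*y) (x'+y+z) - divN (x'*y') (x'+y'+z))) as T1.
  pose proof (Rabs_triang (divN (x*y) (x+y+z) - divN (x'*y') (x'+y'+z))
     (divN (x'*y') (x'+y'+z) - divN (x'*y') (x'+y'+z'))) as T2.
  replace (divN (x*y) (x+y+z) - divN (x'*y') (x'+y'+z')) with
    ((divN (x*y) (x+y+z) - divN (x'*y') (x'+y'+z)) + (divN (x'*y') (x'+y'+z) - divN (x'*y') (x'+y'+z'))) by ring.
  replace (divN (x*y) (x+y+z) - divN (x'*y') (x'+y'+z)) with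
    ((divN (x*y) (x+y+z) - divN (x'*y) (x'+y+z)) + (divN (x'*y) (x'+y+z) - divN (x'*y') (x'+y'+z))) in T2 |- * by ring.
  lra.
Qed.

Definition NN T (x : R -> R) := forall t, T <= t -> 0 <= x t.

Lemma Bnd_divN T x y z : NN T x -> NN T y -> NN T z -> Bnd T x ->
  Bnd T (fun t => divN (x t * y t) (x t + y t + z t)).
Proof.
  intros Hx Hy Hz [B HB]. exists B. intros t Ht.
  pose proof (divN_bounds (x t) (y t) (z t) (Hx t Ht) (Hy t Ht) (Hz t Ht)).
  specialize (HB t Ht). rewrite Rabs_right in * by lra. lra.
Qed.

Lemma UC_divN T x y z : NN T x -> NN T y -> NN T z -> UC T x -> UC T y -> UC T z ->
  UC T (fun t => divN (x t * y t) (x t + y t + z t)).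
Proof.
  intros Hx Hy Hz U1 U2 U3 e He.
  destruct (U1 (e/3)) as [d1 [Hd1 L1]]; [lra|].
  destruct (U2 (e/3)) as [d2 [Hd2 L2]]; [lra|].
  destruct (U3 (e/3)) as [d3 [Hd3 L3]]; [lra|].
  exists (Rmin d1 (Rmin d2 d3)). split; [repeat apply Rmin_pos; auto|].
  intros t s Ht Hs Hts.
  assert (Rabs (t-s) < d1) by (eapply Rlt_le_trans; [exact Hts|apply Rmin_l]).
  assert (Rabs (t-s) < Rmin d2 d3) by (eapply Rlt_le_trans; [exact Hts|apply Rmin_r]).
  assert (Rabs (t-s) < d2) by (eapply Rlt_le_trans; [exact H0|apply Rmin_l]).
  assert (Rabs (t-s) < d3) by (eapply Rlt_le_trans; [exact H0|apply Rmin_r]).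
  eapply Rle_lt_trans; [apply divN_lip; auto|].
  specialize (L1 t s Ht Hs ltac:(assumption)). specialize (L2 t s Ht Hs ltac:(assumption)).
  specialize (L3 t s Ht Hs ltac:(assumption)). lra.
Qed.

Lemma Good_ext T f g : (forall t, T <= t -> f t = g t) -> Good T f -> Good T g.
Proof.
  intros E [U [B HB]]. split.
  - intros e He. destruct (U e He) as [d [Hd L]]. exists d; split; auto.
    intros t s Ht Hs Hts. rewrite <- !E by auto. auto.
  - exists B; intros t Ht; rewrite <- E by auto; auto.
Qed.

Lemma Bnd_ext T f g : (forall t, T <= t -> f t = g t) -> Bnd T f -> Bnd T g.
Proof. intros E [B HB]. exists B; intros t Ht; rewrite <- E by auto; auto. Qed.

Lemma Good_divN T x y z : NN T x -> NN T y -> NN T z -> Good T x -> Good T y -> Good T z ->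
  Good T (fun t => divN (x t * y t) (x t + y t + z t)).
Proof. intros ? ? ? [] [] []. split; [apply UC_divN|apply Bnd_divN]; auto. Qed.

Lemma NN_plus T x y : NN T x -> NN T y -> NN T (fun t => x t + y t).
Proof. intros H1 H2 t Ht; specialize (H1 t Ht); specialize (H2 t Ht); lra. Qed.

Lemma Good_divN2 T x y z : NN T x -> NN T y -> NN T z -> Good T x -> Good T y -> Good T z ->
  Good T (fun t => divN (x t * (y t + z t)) (y t + x t + z t)).
Proof.
  intros. apply Good_ext with (fun t => divN (x t * (y t + z t)) (x t + (y t + z t) + (fun _ => 0) t)).
  - intros; f_equal; ring.
  - apply (Good_divN T x (fun t => y t + z t) (fun _ => 0)); auto.
    + apply NN_plus; auto.
    + intros ? ?; lra.
    + apply Good_plus; auto.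
    + apply Good_const.
Qed.

Lemma Bnd_divN2 T x y z : NN T x -> NN T y -> NN T z -> Bnd T x ->
  Bnd T (fun t => divN (x t * (y t + z t)) (y t + x t + z t)).
Proof.
  intros. apply Bnd_ext with (fun t => divN (x t * (y t + z t)) (x t + (y t + z t) + (fun _ => 0) t)).
  - intros; f_equal; ring.
  - apply (Bnd_divN T x (fun t => y t + z t) (fun _ => 0)); auto.
    + apply NN_plus; auto.
    + intros ? ?; lra.
Qed.

Lemma UC_deriv T x d : (forall t, T <= t -> derivable_pt_lim x t (d t)) -> Bnd T d -> UC T x.
Proof.
  intros Hd [B HB] e He.
  assert (HB0 : 0 <= B) by (eapply Rle_trans; [apply Rabs_pos|apply (HB T)]; lra).
  exists (e/(B+1)). split; [apply Rdiv_lt_0_compat; lra|].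
  assert (key : forall t s, T <= s -> s < t -> Rabs (t-s) < e/(B+1) -> Rabs (x t - x s) < e).
  { intros t s Hs Hst Hts.
    destruct (MVT_cor2 x d s t Hst) as [c [Hc Hc2]].
    { intros c Hc; apply Hd; lra. }
    rewrite Hc, Rabs_mult. specialize (HB c ltac:(lra)).
    apply Rle_lt_trans with ((B+1) * Rabs (t-s)).
    - apply Rmult_le_compat_r; [apply Rabs_pos|lra].
    - apply Rmult_lt_reg_l with (/(B+1)). apply Rinv_0_lt_compat; lra.
      rewrite <- Rmult_assoc, Rinv_l by lra. rewrite Rmult_1_l.
      unfold Rdiv in Hts; rewrite Rmult_comm; auto. }
  intros t s Ht Hs Hts. destruct (Rtotal_order s t) as [H|[H|H]].
  - auto.
  - subst; rewrite Rminus_diag, Rabs_R0; lra.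
  - rewrite Rabs_minus_sym. apply key; auto. rewrite Rabs_minus_sym; auto.
Qed.

Lemma barb T W g : (forall t, T <= t -> derivable_pt_lim W t (g t)) ->
  (forall t, T <= t -> 0 <= g t) -> UC T g -> (exists B, forall t, T <= t -> W t <= B) ->
  forall eps, 0 < eps -> exists M, forall t, M <= t -> g t < eps.
Proof.
  intros Hd Hg U [B HB] eps He.
  assert (mono : forall s t, T <= s -> s <= t -> W s <= W t).
  { intros s t Hs Hst. destruct Hst as [Hst|<-]; [|lra].
    destruct (MVT_cor2 W g s t Hst) as [c [Hc Hc2]].
    { intros c Hc; apply Hd; lra. }
    assert (0 <= g c) by (apply Hg; lra). nra. }
  set (E := fun y => exists t, T <= t /\ y = W t).
  destruct (completeness E) as [L [HL1 HL2]].
  { exists B. intros y [t [Ht ->]]. auto. }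
  { exists (W T). exists T. split; [lra|reflexivity]. }
  destruct (U (eps/2)) as [d [Hd0 Ld]]; [lra|].
  set (h := d/2).
  assert (Hh : 0 < h) by (unfold h; lra).
  destruct (classic (exists M, T <= M /\ L - eps*h/2 < W M)) as [[M [HM HM2]]|NE].
  2:{ exfalso. assert (L <= L - eps*h/2).
      { apply HL2. intros y [t [Ht ->]]. destruct (Rle_or_lt (W t) (L - eps*h/2)); auto.
        exfalso; apply NE; exists t; split; auto. }
      assert (0 < eps * h) by (apply Rmult_lt_0_compat; lra). lra. }
  exists M. intros t Ht. destruct (Rlt_or_le (g t) eps) as [|Hge]; auto. exfalso.
  destruct (MVT_cor2 W g t (t+h)) as [c [Hc Hc2]]; [lra| intros c Hc; apply Hd; lra |].
  assert (Rabs (c - t) < d) by (rewrite Rabs_right; unfold h in *; lra).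
  specialize (Ld c t ltac:(lra) ltac:(lra) ltac:(assumption)).
  assert (g c > eps/2) by (apply Rabs_def2 in Ld; lra).
  assert (W (t+h) <= L) by (apply HL1; exists (t+h); split; [lra|reflexivity]).
  assert (W M <= W t) by (apply mono; lra).
  replace (t + h - t) with h in Hc by ring.
  assert (g c * h > eps/2 * h) by (apply Rmult_gt_compat_r; lra). lra.
Qed.

Lemma const_deriv0 T f : (forall t, T <= t -> derivable_pt_lim f t 0) -> forall t, T <= t -> f t = f T.
Proof.
  intros Hd t Ht. destruct Ht as [Ht|<-]; [|reflexivity].
  destruct (MVT_cor2 f (fun _ => 0) T t Ht) as [c [Hc _]].
  { intros c Hc; apply Hd; lra. }
  lra.
Qed.

Lemma flux beta gam gt ao A q S I Rc So Ro :
  0 <= beta -> 0 <= gam -> 0 <= gt -> 0 <= ao -> 0 <= A -> 0 <= S -> 0 <= I -> 0 <= Rc ->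
  0 <= So -> 0 <= Ro ->
  0 <= - rhsS beta gam ao A q S I Rc So Ro /\ 0 <= rhsD A q S I Rc /\
  0 <= rhsR gam gt A q S I Rc + rhsD A q S I Rc /\
  forall e, 0 < e -> - rhsS beta gam ao A q S I Rc So Ro < e/2 -> rhsD A q S I Rc < e/2 ->
  rhsR gam gt A q S I Rc + rhsD A q S I Rc < e/2 ->
  Rabs (rhsS beta gam ao A q S I Rc So Ro) < e /\ Rabs (rhsI beta gt ao A q S I Rc So Ro) < e /\
  Rabs (rhsR gam gt A q S I Rc) < e /\ Rabs (rhsD A q S I Rc) < e.
Proof.
  intros.
  pose proof (divN_bounds S I Rc ltac:(lra) ltac:(lra) ltac:(lra)) as [X1 _].
  assert (X2 : 0 <= divN (I * (S + Rc)) (S + I + Rc)).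
  { replace (S + I + Rc) with (I + (S + Rc) + 0) by ring.
    apply divN_bounds; lra. }
  pose proof (fpow_nonneg S q). pose proof (fpow_nonneg I q). pose proof (fpow_nonneg Rc q).
  unfold rhsS, rhsI, rhsR, rhsD.
  set (x1 := divN (S * I) (S + I + Rc)) in *.
  set (x2 := divN (I * (S + Rc)) (S + I + Rc)) in *.
  set (fS := fpow S q) in *. set (fI := fpow I q) in *. set (fR := fpow Rc q) in *.
  assert (0 <= beta * x1) by nra. assert (0 <= gam * S) by nra.
  assert (0 <= A * fS) by nra. assert (0 <= A * fI) by nra. assert (0 <= A * fR) by nra.
  assert (0 <= ao * (So + Ro) * S) by (apply Rmult_le_pos; nra).
  assert (0 <= gt * x2) by nra.
  split; [|split; [|split]]; [nra|nra|nra|].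
  intros e He K1 K2 K3.
  repeat split; apply Rabs_def1; nra.
Qed.

Ltac good := repeat first [ apply Good_plus | apply Good_minus | apply Good_opp | apply Good_mult
  | apply Good_const | (eapply Good_fpow; [eassumption|eassumption|eassumption])
  | apply Good_divN2 | apply Good_divN | assumption ].

Lemma Good_range T K x : (forall t, T <= t -> 0 <= x t <= K) -> UC T x -> Good T x /\ NN T x.
Proof.
  intros H U. split; [split; auto|].
  - exists K. intros t Ht. specialize (H t Ht). rewrite Rabs_right; lra.
  - intros t Ht; apply H; auto.
Qed.

Lemma side T K beta q (gam gt ao A S I Rc D So Ro : R -> R) :
  0 <= beta -> 0 <= q ->
  NN T gam -> NN T gt -> NN T ao -> NN T A -> NN T So -> NN T Ro ->
  (forall t, T <= t -> 0 <= S t <= K) -> (forall t, T <= t -> 0 <= I t <= K) ->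
  (forall t, T <= t -> 0 <= Rc t <= K) -> (forall t, T <= t -> 0 <= D t <= K) ->
  Good T gam -> Good T gt -> Good T ao -> Good T A -> Good T So -> Good T Ro ->
  UC T S -> UC T I -> UC T Rc ->
  (forall t, T <= t ->
     derivable_pt_lim S t (rhsS beta (gam t) (ao t) (A t) q (S t) (I t) (Rc t) (So t) (Ro t)) /\
     derivable_pt_lim I t (rhsI beta (gt t) (ao t) (A t) q (S t) (I t) (Rc t) (So t) (Ro t)) /\
     derivable_pt_lim Rc t (rhsR (gam t) (gt t) (A t) q (S t) (I t) (Rc t)) /\
     derivable_pt_lim D t (rhsD (A t) q (S t) (I t) (Rc t))) ->
  deriv_tends_to_0 S /\ deriv_tends_to_0 I /\ deriv_tends_to_0 Rc /\ deriv_tends_to_0 D.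
Proof.
  intros Hb Hq Ngam Ngt Nao NA NSo NRo rS rI rR rD Ggam Ggt Gao GA GSo GRo US UI UR Hd.
  destruct (Good_range T K S rS US) as [GS NS].
  destruct (Good_range T K I rI UI) as [GI NI].
  destruct (Good_range T K Rc rR UR) as [GR NR].
  assert (Fl : forall t, T <= t -> _) by
    (intros t Ht; exact (flux beta (gam t) (gt t) (ao t) (A t) q (S t) (I t) (Rc t) (So t) (Ro t)
      Hb (Ngam t Ht) (Ngt t Ht) (Nao t Ht) (NA t Ht) (NS t Ht) (NI t Ht) (NR t Ht) (NSo t Ht) (NRo t Ht))).
  assert (B1 : forall eps, 0 < eps -> exists M, forall t, M <= t ->
     (fun t => - rhsS beta (gam t) (ao t) (A t) q (S t) (I t) (Rc t) (So t) (Ro t)) t < eps).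
  { apply barb with (T := T) (W := fun t => - S t).
    - intros t Ht. apply (derivable_pt_lim_opp S). apply Hd; auto.
    - intros t Ht. apply (Fl t Ht).
    - assert (Good T (fun t => - rhsS beta (gam t) (ao t) (A t) q (S t) (I t) (Rc t) (So t) (Ro t)))
        by (unfold rhsS; good). apply H.
    - exists 0. intros t Ht. specialize (rS t Ht). lra. }
  assert (B2 : forall eps, 0 < eps -> exists M, forall t, M <= t ->
     (fun t => rhsD (A t) q (S t) (I t) (Rc t)) t < eps).
  { apply barb with (T := T) (W := D).
    - intros t Ht. apply Hd; auto.
    - intros t Ht. apply (Fl t Ht).
    - assert (Good T (fun t => rhsD (A t) q (S t) (I t) (Rc t)))
        by (unfold rhsD; good). apply H.
    - exists K. intros t Ht. specialize (rD t Ht). lra. }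
  assert (B3 : forall eps, 0 < eps -> exists M, forall t, M <= t ->
     (fun t => rhsR (gam t) (gt t) (A t) q (S t) (I t) (Rc t) + rhsD (A t) q (S t) (I t) (Rc t)) t < eps).
  { apply barb with (T := T) (W := fun t => Rc t + D t).
    - intros t Ht. apply (derivable_pt_lim_plus Rc D); apply Hd; auto.
    - intros t Ht. apply (Fl t Ht).
    - assert (Good T (fun t => rhsR (gam t) (gt t) (A t) q (S t) (I t) (Rc t) + rhsD (A t) q (S t) (I t) (Rc t)))
        by (unfold rhsR, rhsD; good). apply H.
    - exists (K + K). intros t Ht. specialize (rD t Ht). specialize (rR t Ht). lra. }
  assert (Main : forall eps, 0 < eps -> exists M, forall t, M <= t ->
     Rabs (rhsS beta (gam t) (ao t) (A t) q (S t) (I t) (Rc t) (So t) (Ro t)) < eps /\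
     Rabs (rhsI beta (gt t) (ao t) (A t) q (S t) (I t) (Rc t) (So t) (Ro t)) < eps /\
     Rabs (rhsR (gam t) (gt t) (A t) q (S t) (I t) (Rc t)) < eps /\
     Rabs (rhsD (A t) q (S t) (I t) (Rc t)) < eps /\ T <= t).
  { intros eps He. destruct (B1 (eps/2)) as [M1 H1]; [lra|].
    destruct (B2 (eps/2)) as [M2 H2]; [lra|].
    destruct (B3 (eps/2)) as [M3 H3]; [lra|].
    exists (Rmax T (Rmax M1 (Rmax M2 M3))). intros t Ht.
    pose proof (Rmax_l T (Rmax M1 (Rmax M2 M3))). pose proof (Rmax_r T (Rmax M1 (Rmax M2 M3))).
    pose proof (Rmax_l M1 (Rmax M2 M3)). pose proof (Rmax_r M1 (Rmax M2 M3)).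
    pose proof (Rmax_l M2 M3). pose proof (Rmax_r M2 M3).
    assert (Ht' : T <= t) by lra.
    destruct (Fl t Ht') as [_ [_ [_ F]]].
    destruct (F eps He) as [? [? [? ?]]].
    - apply H1; lra.
    - apply H2; lra.
    - apply H3; lra.
    - repeat split; auto. }
  repeat split; intros eps He; destruct (Main eps He) as [M HM]; exists M; intros t Ht;
    destruct (HM t Ht) as [? [? [? [? Ht']]]]; destruct (Hd t Ht') as [? [? [? ?]]];
    eexists; split; eassumption.
Qed.

Ltac bnd := repeat first [ apply Bnd_plus | apply Bnd_minus | apply Bnd_opp | apply Bnd_mult
  | apply Bnd_const | (eapply Bnd_fpow; [eassumption|eassumption])
  | apply Bnd_divN2 | apply Bnd_divN | assumption ].

Fixpoint sumabs (l : list R) : R := match l with nil => 0 | e :: l' => Rabs e + sumabs l' end.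

Lemma sumabs_nonneg l : 0 <= sumabs l.
Proof. induction l; simpl; [lra|pose proof (Rabs_pos a); lra]. Qed.

Lemma sumabs_in e l : In e l -> e <= sumabs l.
Proof.
  induction l as [|a l IH]; simpl; [tauto|]. intros [->|H].
  - pose proof (Rle_abs e); pose proof (sumabs_nonneg l); lra.
  - pose proof (Rabs_pos a); specialize (IH H); lra.
Qed.

Lemma Good_cf T0 T h : const_from T0 h -> T0 <= T -> Good T h.
Proof.
  intros H HT. apply Good_ext with (fun _ => h T0).
  - intros t Ht; symmetry; apply H; lra.
  - apply Good_const.
Qed.

Lemma Bnd_range T K x : (forall t, T <= t -> 0 <= x t <= K) -> Bnd T x.
Proof. intros H. exists K. intros t Ht. specialize (H t Ht). rewrite Rabs_right; lra. Qed.

Lemma sum_zero beta gam gt ao A q S I Rc So Ro :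
  rhsS beta gam ao A q S I Rc So Ro + rhsI beta gt ao A q S I Rc So Ro +
  rhsR gam gt A q S I Rc + rhsD A q S I Rc = 0.
Proof. unfold rhsS, rhsI, rhsR, rhsD. ring. Qed.

Lemma conserv T beta q (gam gt ao A S I Rc D So Ro : R -> R) :
  (forall t, T <= t ->
     derivable_pt_lim S t (rhsS beta (gam t) (ao t) (A t) q (S t) (I t) (Rc t) (So t) (Ro t)) /\
     derivable_pt_lim I t (rhsI beta (gt t) (ao t) (A t) q (S t) (I t) (Rc t) (So t) (Ro t)) /\
     derivable_pt_lim Rc t (rhsR (gam t) (gt t) (A t) q (S t) (I t) (Rc t)) /\
     derivable_pt_lim D t (rhsD (A t) q (S t) (I t) (Rc t))) ->
  forall t, T <= t -> S t + I t + Rc t + D t = S T + I T + Rc T + D T.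
Proof.
  intros Hd. apply (const_deriv0 T (fun t => S t + I t + Rc t + D t)).
  intros t Ht. destruct (Hd t Ht) as [H1 [H2 [H3 H4]]].
  rewrite <- (sum_zero beta (gam t) (gt t) (ao t) (A t) q (S t) (I t) (Rc t) (So t) (Ro t)).
  apply derivable_pt_lim_plus; [apply derivable_pt_lim_plus; [apply derivable_pt_lim_plus|]|]; auto.
Qed.
Theorem proposition3
  (* constant parameters *)
  (betab betar etab etar p q : R)
  (* possibly switched (piecewise constant in time) parameters *)
  (alphab alphar gammab gammar gtb gtr deltab deltar : R -> R)
  (* switching event times *)
  (ev : list R) (T0 : R)
  (* the solution *)
  (Sb Ib Rb Db Sr Ir Rr Dr : R -> R)
  (* parameter ranges *)
  (Hbeta : 0 <= betab /\ 0 <= betar)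
  (Heta : 0 <= etab <= 1 /\ 0 <= etar <= 1)
  (Hpq : 0 <= p /\ 0 <= q)
  (Hpar : forall t, 0 <= alphab t /\ 0 <= alphar t /\ 0 <= gammab t <= 1 /\
          0 <= gammar t <= 1 /\ 0 <= gtb t /\ 0 <= gtr t /\
          0 <= deltab t /\ 0 <= deltar t)
  (* piecewise constant with finitely many switching events *)
  (Hpw : Forall (piecewise_const ev)
           (alphab :: alphar :: gammab :: gammar :: gtb :: gtr :: deltab :: deltar :: nil))
  (* all parameters constant for t >= T0 *)
  (HT0 : Forall (const_from T0)
           (alphab :: alphar :: gammab :: gammar :: gtb :: gtr :: deltab :: deltar :: nil))
  (* nonnegative components for all t >= 0 *)
  (Hnn : forall t, 0 <= t ->
          0 <= Sb t /\ 0 <= Ib t /\ 0 <= Rb t /\ 0 <= Db t /\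
          0 <= Sr t /\ 0 <= Ir t /\ 0 <= Rr t /\ 0 <= Dr t)
  (* the solution is continuous for t > 0 *)
  (Hcont : forall t, 0 < t -> Forall (fun C => continuity_pt C t)
           (Sb :: Ib :: Rb :: Db :: Sr :: Ir :: Rr :: Dr :: nil))
  (* the ODE system holds for t > 0 away from switching events *)
  (Hode : forall t, 0 < t -> ~ In t ev ->
     let Ar := attack (deltar t) etar p (Sr t) (Ir t) (Rr t) in
     let Ab := attack (deltab t) etab p (Sb t) (Ib t) (Rb t) in
     derivable_pt_lim Sb t
       (rhsS betab (gammab t) (alphar t) Ar q (Sb t) (Ib t) (Rb t) (Sr t) (Rr t)) /\
     derivable_pt_lim Ib t
       (rhsI betab (gtb t) (alphar t) Ar q (Sb t) (Ib t) (Rb t) (Sr t) (Rr t)) /\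
     derivable_pt_lim Rb t (rhsR (gammab t) (gtb t) Ar q (Sb t) (Ib t) (Rb t)) /\
     derivable_pt_lim Db t (rhsD Ar q (Sb t) (Ib t) (Rb t)) /\
     derivable_pt_lim Sr t
       (rhsS betar (gammar t) (alphab t) Ab q (Sr t) (Ir t) (Rr t) (Sb t) (Rb t)) /\
     derivable_pt_lim Ir t
       (rhsI betar (gtr t) (alphab t) Ab q (Sr t) (Ir t) (Rr t) (Sb t) (Rb t)) /\
     derivable_pt_lim Rr t (rhsR (gammar t) (gtr t) Ab q (Sr t) (Ir t) (Rr t)) /\
     derivable_pt_lim Dr t (rhsD Ab q (Sr t) (Ir t) (Rr t))) :
  Forall deriv_tends_to_0 (Sb :: Ib :: Rb :: Db :: Sr :: Ir :: Rr :: Dr :: nil).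
Proof.
  apply Forall_cons_iff in HT0 as [Ca HT0]. apply Forall_cons_iff in HT0 as [Car HT0].
  apply Forall_cons_iff in HT0 as [Cg HT0]. apply Forall_cons_iff in HT0 as [Cgr HT0].
  apply Forall_cons_iff in HT0 as [Ct HT0]. apply Forall_cons_iff in HT0 as [Ctr HT0].
  apply Forall_cons_iff in HT0 as [Cd HT0]. apply Forall_cons_iff in HT0 as [Cdr _].
  set (T := 1 + Rabs T0 + sumabs ev).
  assert (HT1 : 0 < T) by (pose proof (Rabs_pos T0); pose proof (sumabs_nonneg ev); unfold T; lra).
  assert (HT2 : T0 <= T) by (pose proof (Rle_abs T0); pose proof (sumabs_nonneg ev); unfold T; lra).
  assert (Hev : forall t, T <= t -> ~ In t ev).
  { intros t Ht Hin. apply sumabs_in in Hin. pose proof (Rabs_pos T0). unfold T in Ht; lra. }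
  assert (Hd : forall t, T <= t -> _) by
    (intros t Ht; pose proof (Hode t ltac:(lra) (Hev t Ht)) as X; cbv zeta in X; exact X).
  clear Hode.
  set (Ar := fun t => attack (deltar t) etar p (Sr t) (Ir t) (Rr t)).
  set (Ab := fun t => attack (deltab t) etab p (Sb t) (Ib t) (Rb t)).
  assert (Hdb : forall t, T <= t ->
     derivable_pt_lim Sb t (rhsS betab (gammab t) (alphar t) (Ar t) q (Sb t) (Ib t) (Rb t) (Sr t) (Rr t)) /\
     derivable_pt_lim Ib t (rhsI betab (gtb t) (alphar t) (Ar t) q (Sb t) (Ib t) (Rb t) (Sr t) (Rr t)) /\
     derivable_pt_lim Rb t (rhsR (gammab t) (gtb t) (Ar t) q (Sb t) (Ib t) (Rb t)) /\
     derivable_pt_lim Db t (rhsD (Ar t) q (Sb t) (Ib t) (Rb t))).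
  { intros t Ht; destruct (Hd t Ht) as [? [? [? [? _]]]]; auto. }
  assert (Hdr : forall t, T <= t ->
     derivable_pt_lim Sr t (rhsS betar (gammar t) (alphab t) (Ab t) q (Sr t) (Ir t) (Rr t) (Sb t) (Rb t)) /\
     derivable_pt_lim Ir t (rhsI betar (gtr t) (alphab t) (Ab t) q (Sr t) (Ir t) (Rr t) (Sb t) (Rb t)) /\
     derivable_pt_lim Rr t (rhsR (gammar t) (gtr t) (Ab t) q (Sr t) (Ir t) (Rr t)) /\
     derivable_pt_lim Dr t (rhsD (Ab t) q (Sr t) (Ir t) (Rr t))).
  { intros t Ht; destruct (Hd t Ht) as [_ [_ [_ [_ ?]]]]; auto. }
  clear Hd.
  pose proof (conserv _ _ _ _ _ _ _ _ _ _ _ _ _ Hdb) as Consb.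
  pose proof (conserv _ _ _ _ _ _ _ _ _ _ _ _ _ Hdr) as Consr.
  set (K := (Sb T + Ib T + Rb T + Db T) + (Sr T + Ir T + Rr T + Dr T)).
  assert (Rng : forall t, T <= t ->
     0 <= Sb t <= K /\ 0 <= Ib t <= K /\ 0 <= Rb t <= K /\ 0 <= Db t <= K /\
     0 <= Sr t <= K /\ 0 <= Ir t <= K /\ 0 <= Rr t <= K /\ 0 <= Dr t <= K).
  { intros t Ht. pose proof (Consb t Ht). pose proof (Consr t Ht).
    pose proof (Hnn t ltac:(lra)). pose proof (Hnn T ltac:(lra)). unfold K. lra. }
  assert (rSb : forall t, T <= t -> 0 <= Sb t <= K) by (intros t Ht; apply Rng; auto).
  assert (rIb : forall t, T <= t -> 0 <= Ib t <= K) by (intros t Ht; apply Rng; auto).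
  assert (rRb : forall t, T <= t -> 0 <= Rb t <= K) by (intros t Ht; apply Rng; auto).
  assert (rDb : forall t, T <= t -> 0 <= Db t <= K) by (intros t Ht; apply Rng; auto).
  assert (rSr : forall t, T <= t -> 0 <= Sr t <= K) by (intros t Ht; apply Rng; auto).
  assert (rIr : forall t, T <= t -> 0 <= Ir t <= K) by (intros t Ht; apply Rng; auto).
  assert (rRr : forall t, T <= t -> 0 <= Rr t <= K) by (intros t Ht; apply Rng; auto).
  assert (rDr : forall t, T <= t -> 0 <= Dr t <= K) by (intros t Ht; apply Rng; auto).
  assert (NSb : NN T Sb) by (intros t Ht; apply rSb; auto).
  assert (NIb : NN T Ib) by (intros t Ht; apply rIb; auto).
  assert (NRb : NN T Rb) by (intros t Ht; apply rRb; auto).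
  assert (NSr : NN T Sr) by (intros t Ht; apply rSr; auto).
  assert (NIr : NN T Ir) by (intros t Ht; apply rIr; auto).
  assert (NRr : NN T Rr) by (intros t Ht; apply rRr; auto).
  pose proof (Bnd_range _ _ _ rSb). pose proof (Bnd_range _ _ _ rIb).
  pose proof (Bnd_range _ _ _ rRb). pose proof (Bnd_range _ _ _ rSr).
  pose proof (Bnd_range _ _ _ rIr). pose proof (Bnd_range _ _ _ rRr).
  assert (Ga := Good_cf _ _ _ Ca HT2). assert (Gar := Good_cf _ _ _ Car HT2).
  assert (Gg := Good_cf _ _ _ Cg HT2). assert (Ggr := Good_cf _ _ _ Cgr HT2).
  assert (Gt := Good_cf _ _ _ Ct HT2). assert (Gtr := Good_cf _ _ _ Ctr HT2).
  assert (Gd := Good_cf _ _ _ Cd HT2). assert (Gdr := Good_cf _ _ _ Cdr HT2).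
  pose proof (proj2 Ga). pose proof (proj2 Gar). pose proof (proj2 Gg). pose proof (proj2 Ggr).
  pose proof (proj2 Gt). pose proof (proj2 Gtr). pose proof (proj2 Gd). pose proof (proj2 Gdr).
  destruct Hpq as [Hp Hq]. destruct Hbeta as [Hbb Hbr].
  assert (BAr : Bnd T Ar) by (unfold Ar, attack; bnd).
  assert (BAb : Bnd T Ab) by (unfold Ab, attack; bnd).
  assert (USb : UC T Sb) by (eapply UC_deriv; [intros t Ht; apply (Hdb t Ht)|unfold rhsS; bnd]).
  assert (UIb : UC T Ib) by (eapply UC_deriv; [intros t Ht; apply (Hdb t Ht)|unfold rhsI; bnd]).
  assert (URb : UC T Rb) by (eapply UC_deriv; [intros t Ht; apply (Hdb t Ht)|unfold rhsR; bnd]).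
  assert (USr : UC T Sr) by (eapply UC_deriv; [intros t Ht; apply (Hdr t Ht)|unfold rhsS; bnd]).
  assert (UIr : UC T Ir) by (eapply UC_deriv; [intros t Ht; apply (Hdr t Ht)|unfold rhsI; bnd]).
  assert (URr : UC T Rr) by (eapply UC_deriv; [intros t Ht; apply (Hdr t Ht)|unfold rhsR; bnd]).
  destruct (Good_range _ _ _ rSb USb) as [GSb _].
  destruct (Good_range _ _ _ rIb UIb) as [GIb _].
  destruct (Good_range _ _ _ rRb URb) as [GRb _].
  destruct (Good_range _ _ _ rSr USr) as [GSr _].
  destruct (Good_range _ _ _ rIr UIr) as [GIr _].
  destruct (Good_range _ _ _ rRr URr) as [GRr _].
  assert (GAr : Good T Ar) by (unfold Ar, attack; good).
  assert (GAb : Good T Ab) by (unfold Ab, attack; good).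
  assert (NN0 : forall h : R -> R, (forall t, 0 <= h t) -> NN T h) by (intros h Hh t _; auto).
  assert (NAr : NN T Ar).
  { intros t _. unfold Ar, attack. pose proof (Hpar t).
    pose proof (fpow_nonneg (Sr t) p). pose proof (fpow_nonneg (Rr t) p). pose proof (fpow_nonneg (Ir t) p).
    apply Rmult_le_pos; [tauto|]. nra. }
  assert (NAb : NN T Ab).
  { intros t _. unfold Ab, attack. pose proof (Hpar t).
    pose proof (fpow_nonneg (Sb t) p). pose proof (fpow_nonneg (Rb t) p). pose proof (fpow_nonneg (Ib t) p).
    apply Rmult_le_pos; [tauto|]. nra. }
  destruct (side T K betab q gammab gtb alphar Ar Sb Ib Rb Db Sr Rr) as [X1 [X2 [X3 X4]]];
    auto; try (apply NN0; intro t; pose proof (Hpar t); tauto).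
  destruct (side T K betar q gammar gtr alphab Ab Sr Ir Rr Dr Sb Rb) as [Y1 [Y2 [Y3 Y4]]];
    auto; try (apply NN0; intro t; pose proof (Hpar t); tauto).
  repeat (apply Forall_cons; [assumption|]). apply Forall_nil.
Qed.
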